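(* Let $\mathbf X\in\mathbb R^{N\times d}$ (rows $x_1^T,\dots,x_N^T$) with $\mathbf X^T\mathbf X=\mathbf V\mathbf S\mathbf V^T$ positive definite, $\mathbf S=\mathrm{diag}(s_1,\dots,s_d)$, $s_{\min}=\min_i s_i$, and let $\mathbf y\in\mathbb R^N$. Let $0<\eta\le1/\|\mathbf X^T\mathbf X\|_{\mathrm{op}}$ and define the gradient descent iterates $w_0=0$, $w_t=w_{t-1}+\eta\mathbf X^T(\mathbf y-\mathbf Xw_{t-1})$, so $w_t=\mathbf V\mathbf S^{-1}(\mathbf I-(\mathbf I-\eta\mathbf S)^t)\mathbf V^T\mathbf X^T\mathbf y$. For $\lambda=\frac1{t\eta}$ let $\widetilde w_\lambda=(\mathbf X^T\mathbf X+\lambda\mathbf I)^{-1}\mathbf X^T\mathbf y$. Let $f_t(x)=w_t^Tx$, $\widetilde f_\lambda(x)=\widetilde w_\lambda^Tx$, and $c(t,\eta)=\min\big(0.25,\frac1{s_{\min}^2t^2\eta^2}\big)$. Then $$\sum_{i=1}^N(f_t(x_i)-\widetilde f_\lambda(x_i))^2\le c(t,\eta)\sum_{i=1}^N f_t(x_i)^2,$$ and, for a distribution $\mathcal D_{\mathcal X}$ on $\mathbb R^d$ with positive definite second-moment matrix $\Sigma=\mathbb E_{x\sim\mathcal D_{\mathcal X}}[xx^T]$ of condition number $\kappa$, $$\mathbb E_{x\sim\mathcal D_{\mathcal X}}\big[(f_t(x)-\widetilde f_\lambda(x))^2\big]\le\kappa\, c(t,\eta)\,\mathbb E_{x\sim\mathcal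 D_{\mathcal X}}\big[f_t(x)^2\big].$$
   Context: $t\ge1$ is an integer. $\|\cdot\|_{\mathrm{op}}$ is the operator norm; $\kappa$ is the ratio of largest to smallest eigenvalue of $\Sigma$. *)

(* Defs.v *)
From HB Require Import structures.
From mathcomp Require Import all_boot all_order all_algebra.
From mathcomp Require Import all_classical all_reals all_analysis.
Set Implicit Arguments. Unset Strict Implicit. Unset Printing Implicit Defensive.
Import Order.TTheory GRing.Theory Num.Theory.
Local Open Scope classical_set_scope.
Local Open Scope ring_scope.

Section Defs.
Variable R : realType.

Definition vnorm n (v : 'cV[R]_n) : R := Num.sqrt (\sum_i v i 0 ^+ 2).

Definition opnorm n (A : 'M[R]_n) : R :=
  sup [set r | exists v : 'cV[R]_n, vnorm v <= 1 /\ r = vnorm (A *m v)].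

Fixpoint gd N d (X : 'M[R]_(N, d)) (y : 'cV[R]_N) (eta : R) (t : nat) : 'cV[R]_d :=
  match t with
  | 0 => 0
  | t'.+1 => gd X y eta t' + eta *: (X^T *m (y - X *m gd X y eta t'))
  end.

Definition ridge N d (X : 'M[R]_(N, d)) (y : 'cV[R]_N) (lambda : R) : 'cV[R]_d :=
  invmx (X^T *m X + lambda%:M) *m (X^T *m y).

Definition linf d (w x : 'cV[R]_d) : R := \sum_j w j 0 * x j 0.

Definition datapt N d (X : 'M[R]_(N, d)) (i : 'I_N) : 'cV[R]_d := (row i X)^T.

Definition eigs n (A : 'M[R]_n) : set R := [set a | eigenvalue A a].
Definition cond_number n (A : 'M[R]_n) : R := sup (eigs A) / inf (eigs A).

Definition cte (smin : R) (t : nat) (eta : R) : R :=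
  Num.min (1 / 4) (1 / (smin ^+ 2 * t%:R ^+ 2 * eta ^+ 2)).

End Defs.
Arguments datapt {R N d} X i.

(* Main.v *)
Require Import Defs.
From HB Require Import structures.
From mathcomp Require Import all_boot all_order all_algebra.
From mathcomp Require Import all_classical all_reals all_analysis.
From mathcomp Require Import complex spectral sesquilinear.
From mathcomp Require Import ring lra.
Import Order.TTheory GRing.Theory Num.Theory.
Local Open Scope classical_set_scope.
Local Open Scope ring_scope.

Lemma pow_facts (R : realType) (x : R) (n : nat) : 0 <= x -> x <= 1 ->
  [/\ 0 <= (1 - x) ^+ n, (1 - x) ^+ n <= 1, 1 - (1 - x) ^+ n <= x * n%:R &
      (1 + x * n%:R) * (1 - x) ^+ n <= 1].
Proof.
move=> x0 x1; elim: n => [|n [h0 h1 h2 h3]].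
  by rewrite expr0 mulr0 addr0 mul1r subrr; split => //; lra.
rewrite exprS -natr1; split.
- by apply: mulr_ge0 => //; lra.
- nra.
- nra.
- nra.
Qed.

Lemma scalar_key (R : realType) (s smin eta : R) (t : nat) :
  0 < smin -> smin <= s -> 0 < eta -> eta * s <= 1 -> (1 <= t)%N ->
  ((1 - (1 - eta * s) ^+ t) / s - 1 / (s + 1 / (t%:R * eta))) ^+ 2
    <= cte smin t eta * ((1 - (1 - eta * s) ^+ t) / s) ^+ 2.
Proof.
move=> sm0 sms e0 es1 t1.
have s0 : 0 < s by lra.
have T1 : 1 <= t%:R :> R by rewrite ler1n.
set T : R := t%:R in T1 *.
have [p0 p1 hb ha] := @pow_facts R (eta * s) t (ltW (mulr_gt0 e0 s0)) es1.
rewrite -/T in hb ha.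
set p := (1 - eta * s) ^+ t in p0 p1 hb ha *.
set y := eta * s * T in hb ha.
have y0 : 0 < y by rewrite /y; apply: mulr_gt0 => //; [apply: mulr_gt0|lra].
set q := 1 - p * (1 + y).
have E1 : (1 - p) / s - 1 / (s + 1 / (T * eta)) = q / ((y + 1) * s).
  rewrite /q /y; field.
  rewrite -/T; apply/and4P; split; apply: lt0r_neq0; try lra.
  rewrite -/y; lra.
rewrite E1.
have q0 : 0 <= q by rewrite /q; lra.
have Z0 : 0 < (y + 1) * s by apply: mulr_gt0 => //; lra.
have E2 : (1 - p) / s = ((1 - p) * (y + 1)) / ((y + 1) * s).
  by field; apply/andP; split; apply: lt0r_neq0; lra.
rewrite E2.
set Z := (y + 1) * s in Z0 E1 E2 *.
set g := (1 - p) * (y + 1).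
have hq2 : 2 * q <= g.
  rewrite /q /g; case: (lerP y 1) => hy; nra.
set m := smin * T * eta.
have m0 : 0 < m by rewrite /m; apply: mulr_gt0 => //; apply: mulr_gt0 => //; lra.
have my : m <= y.
  rewrite /m /y.
  have hTe : 0 <= T * eta by apply: mulr_ge0; lra.
  have : 0 <= (s - smin) * (T * eta) by apply: mulr_ge0; lra.
  lra.
have hqm : m * q <= g.
  have : y * q <= g by rewrite /g /q; nra.
  nra.
have Zi : 0 < Z^-1 by rewrite invr_gt0.
rewrite /cte.
have -> : 1 / (smin ^+ 2 * T ^+ 2 * eta ^+ 2) = (m ^+ 2)^-1.
  by rewrite /m !exprMn mul1r.
rewrite /Order.min; case: ifP => _.
  rewrite !expr_div_n mulrA ler_pM2r; last by rewrite invr_gt0 exprn_gt0.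
  nra.
rewrite !expr_div_n mulrA ler_pM2r; last by rewrite invr_gt0 exprn_gt0.
rewrite mulrC.
rewrite ler_pdivlMr ?exprn_gt0 // -exprMn.
rewrite lerXn2r ?nnegrE //; try nra.
Qed.

Section Ray.
Variable R : realType.
Local Notation C := (R[i]).
Local Notation f := (real_complex R).

Lemma conjC_f (r : R) : (f r)^* = f r.
Proof. exact: conjc_real. Qed.

Lemma real_eqf (z : C) : z \is Num.real -> z = f (complex.Re z).
Proof.
rewrite realE => /orP[h|h].
  by have := ger0_Im h; case: z h => a b /= _ ->.
have : 0 <= - z by rewrite oppr_ge0.
move/ger0_Im; case: z h => a b /= _.
by move/eqP; rewrite oppr_eq0 => /eqP ->.
Qed.

Lemma diag_form n (w : 'rV[C]_n) (D : 'rV[C]_n) :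
  (w *m diag_mx D *m (w ^t Num.conj)%sesqui) 0 0 = \sum_i D 0 i * `|w 0 i| ^+ 2.
Proof.
rewrite mxE; apply: eq_bigr => i _.
by rewrite mul_mx_diag !mxE normCK [w 0 i * _]mulrC -mulrA.
Qed.


Lemma trmxC_mul m n p (A : 'M[C]_(m, n)) (B : 'M[C]_(n, p)) :
  ((A *m B) ^t Num.conj)%sesqui = (B ^t Num.conj)%sesqui *m (A ^t Num.conj)%sesqui.
Proof. by rewrite trmx_mul map_mxM. Qed.

Lemma rayleigh n (S : 'M[R]_n.+1) : S^T = S ->
  exists a b : R, [/\ eigenvalue S a, eigenvalue S b &
   forall u : 'cV[R]_n.+1, a * (u^T *m u) 0 0 <= (u^T *m S *m u) 0 0 /\
                           (u^T *m S *m u) 0 0 <= b * (u^T *m u) 0 0].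
Proof.
move=> symS.
pose Sc := map_mx f S.
have herm : Sc \is hermsymmx.
  apply/is_hermitianmxP; rewrite expr0 scale1r; apply/matrixP => i j.
  by rewrite !mxE conjC_f -[in LHS]symS mxE.
have /orthomx_spectralP Seq := hermitian_normalmx herm.
set P := spectralmx Sc in Seq; set D := spectral_diag Sc in Seq.
have Pu : P \is unitarymx := spectral_unitarymx Sc.
have PPt : P *m (P ^t Num.conj)%sesqui = 1%:M := unitarymxP Pu.
have PtP : (P ^t Num.conj)%sesqui *m P = 1%:M := mulmx1C PPt.
rewrite invmx_unitary // in Seq.
have Dreal : D \is a realmx := hermitian_spectral_diag_real herm.
pose a i := complex.Re (D 0 i).
have Df : forall i, D 0 i = f (a i) by move=> i; apply: real_eqf; apply: (mxOverP Dreal).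
have eig : forall i, eigenvalue S (a i).
  move=> i; rewrite eigenvalue_root_char -(fmorph_root f) map_char_poly.
  rewrite -eigenvalue_root_char -/Sc.
  suff E : eigenvalue Sc (D 0 i) by move: E; rewrite Df.
  apply/eigenvalueP; exists (row i P).
    have : P *m Sc = diag_mx D *m P by rewrite {1}Seq !mulmxA PPt mul1mx.
    by move/(congr1 (row i)); rewrite row_mul => ->; apply/rowP => k; rewrite mul_diag_mx !mxE.
  apply/negP => /eqP Pi0.
  have := PPt; move/matrixP/(_ i i); rewrite [in X in X -> _]mxE [in X in X -> _]mxE eqxx /=.
  rewrite big1 => [|k _]; first by move/eqP; rewrite eq_sym oner_eq0.
  by move/matrixP/(_ 0 k): Pi0; rewrite !mxE => ->; rewrite mul0r.
have key : forall u : 'cV[R]_n.+1,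
   f ((u^T *m S *m u) 0 0) = \sum_i D 0 i * `|(map_mx f u^T *m (P ^t Num.conj)%sesqui) 0 i| ^+ 2 /\
   f ((u^T *m u) 0 0) = \sum_i `|(map_mx f u^T *m (P ^t Num.conj)%sesqui) 0 i| ^+ 2.
  move=> u; set w := map_mx f u^T *m (P ^t Num.conj)%sesqui.
  have ucT : ((map_mx f u^T) ^t Num.conj)%sesqui = map_mx f u.
    by apply/matrixP => i j; rewrite !mxE conjC_f.
  have wT : (w ^t Num.conj)%sesqui = P *m map_mx f u.
    by rewrite trmxC_mul trmxCK ucT.
  split.
    rewrite -diag_form wT (_ : f ((u^T *m S *m u) 0 0) = (map_mx f (u^T *m S *m u)) 0 0); last by rewrite [RHS]mxE.
    rewrite !map_mxM -/Sc Seq.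
    by rewrite /w !mulmxA.
  rewrite (_ : f ((u^T *m u) 0 0) = (map_mx f (u^T *m u)) 0 0); last by rewrite [RHS]mxE.
  rewrite map_mxM -[X in X *m _]mulmx1 -PtP !mulmxA -/w -mulmxA -wT.
  rewrite mxE; apply: eq_bigr => i _.
  by rewrite !mxE normCK.
pose imax := Order.arg_max (ord0 : 'I_n.+1) xpredT a.
pose imin := Order.arg_min (ord0 : 'I_n.+1) xpredT a.
have amax : forall j, a j <= a imax.
  by rewrite /imax; case: arg_maxP => // i _ H j; apply: H.
have amin : forall j, a imin <= a j.
  by rewrite /imin; case: arg_minP => // i _ H j; apply: H.
exists (a imin), (a imax); split => // u.
have [k1 k2] := key u.
set w := map_mx f u^T *m (P ^t Num.conj)%sesqui in k1 k2.
have k3 c : f (c * (u^T *m u) 0 0) = \sum_i f c * `|w 0 i| ^+ 2.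
  by rewrite -mulr_sumr -k2; exact: rmorphM.
split; rewrite -lecR k1 k3; apply: ler_sum => i _.
  apply: (ler_wpM2r (exprn_ge0 2 (normr_ge0 (w 0 i)))).
  by rewrite Df lecR.
apply: (ler_wpM2r (exprn_ge0 2 (normr_ge0 (w 0 i)))).
by rewrite Df lecR.
Qed.
End Ray.

Section Mat.
Variables (R : realType) (n : nat) (V : 'M[R]_n) (s : 'rV[R]_n).
Hypothesis VtV : V^T *m V = 1%:M.
Let VVt : V *m V^T = 1%:M := mulmx1C VtV.
Local Notation A := (V *m diag_mx s *m V^T).

Lemma sq_tr (v : 'cV[R]_n) : (v^T *m v) 0 0 = \sum_i v i 0 ^+ 2.
Proof. by rewrite mxE; apply: eq_bigr => i _; rewrite !mxE expr2. Qed.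

Lemma norm_Vt (v : 'cV[R]_n) : ((V^T *m v)^T *m (V^T *m v)) 0 0 = (v^T *m v) 0 0.
Proof. by rewrite trmx_mul trmxK mulmxA -[_ *m V *m _]mulmxA VVt mulmx1. Qed.

Lemma VtA : V^T *m A = diag_mx s *m V^T.
Proof. by rewrite !mulmxA VtV mul1mx. Qed.

Lemma quadA (w : 'cV[R]_n) :
  (w^T *m A *m w) 0 0 = \sum_j s 0 j * (V^T *m w) j 0 ^+ 2.
Proof.
have -> : w^T *m A *m w = (V^T *m w)^T *m diag_mx s *m (V^T *m w).
  by rewrite trmx_mul trmxK !mulmxA.
rewrite mxE; apply: eq_bigr => j _.
by rewrite mul_mx_diag !mxE; ring.
Qed.

Lemma diag_mul (d1 d2 : 'rV[R]_n) :
  diag_mx d1 *m diag_mx d2 = diag_mx (\row_j (d1 0 j * d2 0 j)).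
Proof.
apply/matrixP => i j; rewrite mul_diag_mx !mxE.
by case: eqVneq => _; rewrite ?mulr1n ?mulr0n ?mulr0.
Qed.

Lemma ridge_inv (lam : R) (hpos : forall i, 0 < s 0 i + lam) :
  invmx (A + lam%:M) = V *m diag_mx (\row_j (s 0 j + lam)^-1) *m V^T.
Proof.
pose M := V *m diag_mx (\row_j (s 0 j + lam)^-1) *m V^T.
have E : A + lam%:M = V *m diag_mx (\row_j (s 0 j + lam)) *m V^T.
  have -> : lam%:M = V *m diag_mx (\row_j lam) *m V^T.
    have -> : diag_mx (\row_j lam) = lam%:M :> 'M[R]_n.
      by apply/matrixP => i j; rewrite !mxE.
    by rewrite mul_mx_scalar -scalemxAl VVt scalemx1.
  rewrite -mulmxDl -mulmxDr; congr (_ *m _ *m _).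
  by apply/matrixP => i j; rewrite !mxE mulrnDl.
have EM : (A + lam%:M) *m M = 1%:M.
  rewrite E /M !mulmxA -[_ *m V^T *m V]mulmxA VtV mulmx1 -[_ *m diag_mx _ *m diag_mx _]mulmxA.
  rewrite diag_mul (_ : diag_mx _ = 1%:M); last first.
    apply/matrixP => i j; rewrite !mxE mulfV //; apply: lt0r_neq0; exact: hpos.
  by rewrite mulmx1 VVt.
have [U _] := mulmx1_unit EM.
by rewrite -[RHS](mulKmx U) EM mulmx1.
Qed.

End Mat.

Lemma linf_datapt (R : realType) N d (X : 'M[R]_(N, d)) (w : 'cV[R]_d) i :
  linf w (datapt X i) = (X *m w) i 0.
Proof. by rewrite /linf mxE; apply: eq_bigr => j _; rewrite !mxE mulrC. Qed.

Lemma sum_data (R : realType) N d (X : 'M[R]_(N, d)) (w : 'cV[R]_d) :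
  \sum_i linf w (datapt X i) ^+ 2 = (w^T *m (X^T *m X) *m w) 0 0.
Proof.
under eq_bigr do rewrite linf_datapt.
by rewrite -sq_tr trmx_mul !mulmxA.
Qed.

Lemma linf_sub (R : realType) d (a b x : 'cV[R]_d) :
  linf a x - linf b x = linf (a - b) x.
Proof. by rewrite /linf -sumrB; apply: eq_bigr => j _; rewrite !mxE mulrBl. Qed.

Lemma gd_coord (R : realType) N n (V : 'M[R]_n) (s : 'rV[R]_n)
  (X : 'M[R]_(N, n)) (y : 'cV[R]_N) (eta : R) :
  V^T *m V = 1%:M -> X^T *m X = V *m diag_mx s *m V^T ->
  (forall i, 0 < s 0 i) -> forall t i,
  (V^T *m gd X y eta t) i 0 =
    (V^T *m (X^T *m y)) i 0 * ((1 - (1 - eta * s 0 i) ^+ t) / s 0 i).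
Proof.
move=> VtV hA spos; elim=> [|t IH] i /=.
  by rewrite mulmx0 !mxE expr0 subrr mul0r mulr0.
have E : V^T *m (gd X y eta t + eta *: (X^T *m (y - X *m gd X y eta t))) =
  V^T *m gd X y eta t + eta *: (V^T *m (X^T *m y) - diag_mx s *m (V^T *m gd X y eta t)).
  have VA : V^T *m (X^T *m (X *m gd X y eta t)) = diag_mx s *m (V^T *m gd X y eta t).
    by rewrite [X^T *m _]mulmxA hA !mulmxA VtV mul1mx.
  by rewrite mulmxDr -scalemxAr mulmxBr mulmxBr VA.
rewrite E mul_diag_mx.
set g := V^T *m gd X y eta t in IH *; set b := V^T *m (X^T *m y) in IH *.
have e1 : (g + eta *: (b - \matrix_(i0, j) (s 0 i0 * g i0 j))) i 0
   = g i 0 + eta * (b i 0 - s 0 i * g i 0) by rewrite !mxE.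
rewrite e1 IH.
have := spos i; move: (s 0 i) => si si0.
rewrite exprS; field; exact: lt0r_neq0.
Qed.

Lemma ridge_coord (R : realType) N n (V : 'M[R]_n) (s : 'rV[R]_n)
  (X : 'M[R]_(N, n)) (y : 'cV[R]_N) (lam : R) :
  V^T *m V = 1%:M -> X^T *m X = V *m diag_mx s *m V^T ->
  (forall i, 0 < s 0 i + lam) -> forall i,
  (V^T *m ridge X y lam) i 0 = (V^T *m (X^T *m y)) i 0 / (s 0 i + lam).
Proof.
move=> VtV hA hpos i.
rewrite /ridge hA (@ridge_inv R n V s VtV lam hpos).
have -> : V^T *m (V *m diag_mx (\row_j (s 0 j + lam)^-1) *m V^T *m (X^T *m y)) =
  diag_mx (\row_j (s 0 j + lam)^-1) *m (V^T *m (X^T *m y)) by rewrite !mulmxA VtV mul1mx.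
rewrite mul_diag_mx; set b := V^T *m _.
have -> : (\matrix_(i0, j) ((\row_j0 (s 0 j0 + lam)^-1) 0 i0 * b i0 j)) i 0 =
   (s 0 i + lam)^-1 * b i 0 by rewrite !mxE.
by rewrite mulrC.
Qed.

Lemma sup_max (R : realType) (E : set R) m :
  E m -> (forall e, E e -> e <= m) -> sup E = m.
Proof.
move=> Em ub; apply/le_anti/andP; split.
  by apply: (ge_sup (E := E)); [exists m | exact: ub].
by apply: sup_upper_bound => //; split; [exists m | exists m].
Qed.

Lemma inf_min (R : realType) (E : set R) m :
  E m -> (forall e, E e -> m <= e) -> inf E = m.
Proof.
move=> Em lb; rewrite /inf (@sup_max _ _ (- m)) ?opprK //.
move=> _ [e Ee <-]; rewrite lerN2; exact: lb.
Qed.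

Lemma normM_le (R : realType) (a b : R) : `|a * b| <= `|a ^+ 2 + b ^+ 2|.
Proof.
rewrite normrM (ger0_norm (addr_ge0 (sqr_ge0 a) (sqr_ge0 b))).
rewrite -(real_normK (num_real a)) -(real_normK (num_real b)).
move: (normr_ge0 a) (normr_ge0 b); move: `|a| `|b| => x y hx hy.
have := sqr_ge0 (x - y); have := mulr_ge0 hx hy; nra.
Qed.

Lemma int_quad (R : realType) (d0 : measure_display) (T : measurableType d0)
  (P : probability T R) n (x : T -> 'cV[R]_n) :
  (forall j, measurable_fun setT (fun w => x w j 0)) ->
  (forall j, P.-integrable setT (fun w => ((x w j 0) ^+ 2)%:E)) ->
  forall u : 'cV[R]_n,
  (\int[P]_w ((linf u (x w)) ^+ 2)%:E =
   ((u^T *m (\matrix_(j, k) Rintegral P setT (fun w => x w j 0 * x w k 0)) *m u) 0 0)%:E)%E.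
Proof.
move=> hm hi u.
have iprod j k : P.-integrable setT (fun w => (x w j 0 * x w k 0)%:E).
  apply: (le_integrable measurableT _ _ (integrableD measurableT (hi j) (hi k))).
    by apply/measurable_realfun.measurable_EFinP; apply: measurable_realfun.measurable_funM.
  by move=> w _; rewrite /= lee_fin normM_le.
have E : (fun w => ((linf u (x w)) ^+ 2)%:E) =
  (fun w => \sum_(j < n) \sum_(k < n) ((u j 0 * u k 0)%:E * (x w j 0 * x w k 0)%:E))%E.
  apply/funext => w; rewrite /linf expr2 mulr_suml -sumEFin.
  apply: eq_bigr => j _; rewrite mulr_sumr -sumEFin; apply: eq_bigr => k _.
  by rewrite -EFinM; congr (_%:E); ring.
rewrite E integral_sum //; last first.
  move=> j; apply: integrable_sum => // k _; exact: integrableZl.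
set M := \matrix_(j, k) _.
have R1 : (u^T *m M *m u) 0 0 = \sum_(j < n) \sum_(k < n) (u j 0 * u k 0) * M j k.
  rewrite mxE; under eq_bigr do rewrite mxE mulr_suml.
  rewrite exchange_big /=; apply: eq_bigr => j _; apply: eq_bigr => k _.
  rewrite !mxE; ring.
rewrite R1 -sumEFin; apply: eq_bigr => j _.
rewrite integral_sum //; last by move=> k; exact: integrableZl.
rewrite -sumEFin; apply: eq_bigr => k _.
rewrite integralZl // /M mxE /Rintegral [RHS]EFinM fineK //.
exact: integrable_fin_num.
Qed.

Theorem proposition2 (R : realType) (N d : nat)
  (X : 'M[R]_(N, d.+1)) (y : 'cV[R]_N)
  (V : 'M[R]_d.+1) (s : 'rV[R]_d.+1)
  (eta : R) (t : nat)
  (d0 : measure_display) (T : measurableType d0) (P : probability T R)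
  (x : T -> 'cV[R]_d.+1) :
  V^T *m V = 1%:M ->
  X^T *m X = V *m diag_mx s *m V^T ->
  (forall v : 'cV[R]_d.+1, v != 0 -> 0 < (v^T *m (X^T *m X) *m v) 0 0) ->
  0 < eta -> eta <= 1 / opnorm (X^T *m X) ->
  (1 <= t)%N ->
  let smin := \big[Num.min/s 0 ord0]_(i < d.+1) s 0 i in
  let lambda := 1 / (t%:R * eta) in
  let wt := gd X y eta t in
  let wl := ridge X y lambda in
  let c := cte smin t eta in
  \sum_(i < N) (linf wt (datapt X i) - linf wl (datapt X i)) ^+ 2
    <= c * \sum_(i < N) linf wt (datapt X i) ^+ 2
  /\
  ((forall j, measurable_fun setT (fun w => x w j 0)) ->
   (forall j, P.-integrable setT (fun w => ((x w j 0) ^+ 2)%:E)) ->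
   let Sigma := \matrix_(j, k) Rintegral P setT (fun w => x w j 0 * x w k 0) in
   (forall v : 'cV[R]_d.+1, v != 0 -> 0 < (v^T *m Sigma *m v) 0 0) ->
   let kappa := cond_number Sigma in
   (\int[P]_w ((linf wt (x w) - linf wl (x w)) ^+ 2)%:E
     <= (kappa * c)%:E * \int[P]_w ((linf wt (x w)) ^+ 2)%:E)%E).
Proof.
move=> VtV hA PD eta0 etaop t1 smin lambda wt wl c.
have VVt : V *m V^T = 1%:M := mulmx1C VtV.
pose b := V^T *m (X^T *m y).
have spos : forall i, 0 < s 0 i.
  move=> i; pose v : 'cV[R]_d.+1 := V *m delta_mx i 0.
  have Vtv : V^T *m v = delta_mx i 0 by rewrite /v mulmxA VtV mul1mx.
  have vn0 : v != 0.
    apply/eqP => v0; move: Vtv; rewrite v0 mulmx0 => /matrixP/(_ i 0).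
    by rewrite !mxE !eqxx /= => /eqP; rewrite eq_sym oner_eq0.
  have := PD v vn0; rewrite hA quadA Vtv (bigD1 i) //= big1 ?addr0.
    by rewrite mxE !eqxx /= expr1n mulr1.
  by move=> j ji; rewrite mxE (negbTE ji) /= expr0n /= mulr0.
have smin0 : 0 < smin by apply: lt_bigmin => // i _; apply: spos.
have sminle : forall i, smin <= s 0 i by move=> i; exact: bigmin_le.
have sq_vnorm : forall v : 'cV[R]_d.+1, vnorm v = Num.sqrt ((v^T *m v) 0 0).
  by move=> v; rewrite sq_tr.
pose B := \sum_i s 0 i.
have sB : forall i, s 0 i <= B.
  move=> i; rewrite /B (bigD1 i) //= lerDl; apply: sumr_ge0 => j _; exact: ltW.
have normA : forall v : 'cV[R]_d.+1, ((X^T *m X *m v)^T *m (X^T *m X *m v)) 0 0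
     = \sum_j (s 0 j * (V^T *m v) j 0) ^+ 2.
  move=> v; have VAv : V^T *m (X^T *m X *m v) = diag_mx s *m (V^T *m v).
    by rewrite mulmxA hA (@VtA _ _ _ _ VtV) -mulmxA.
  rewrite -(@norm_Vt _ _ _ VtV) VAv sq_tr.
  by apply: eq_bigr => j _; rewrite mul_diag_mx mxE.
set Eset := [set r | exists v : 'cV[R]_d.+1, vnorm v <= 1 /\ r = vnorm (X^T *m X *m v)].
have Eub : forall r, Eset r -> r <= B.
  move=> _ [v [hv ->]].
  have hv1 : (v^T *m v) 0 0 <= 1.
    by move: hv; rewrite sq_vnorm -[X in _ <= X]sqrtr1 ler_sqrt.
  have B0 : 0 <= B by apply: le_trans (sB ord0); apply: ltW.
  rewrite sq_vnorm normA -(ger0_norm B0) -sqrtr_sqr; apply: ler_wsqrtr.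
  apply: (@le_trans _ _ (B ^+ 2 * (v^T *m v) 0 0)); last first.
    by rewrite -[X in _ <= X]mulr1; apply: ler_wpM2l => //; apply: sqr_ge0.
  rewrite -(@norm_Vt _ _ _ VtV) sq_tr mulr_sumr; apply: ler_sum => j _.
  rewrite exprMn; apply: ler_wpM2r; first exact: sqr_ge0.
  have := spos j; have := sB j; nra.
have Emem : forall j, Eset (s 0 j).
  move=> j; pose v : 'cV[R]_d.+1 := V *m delta_mx j 0.
  have Vtv : V^T *m v = delta_mx j 0 by rewrite /v mulmxA VtV mul1mx.
  exists v; split.
    rewrite sq_vnorm -(@norm_Vt _ _ _ VtV) Vtv sq_tr (bigD1 j) //= big1 ?addr0.
      by rewrite mxE !eqxx /= expr1n sqrtr1.
    by move=> k kj; rewrite mxE (negbTE kj) /= expr0n.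
  rewrite sq_vnorm normA Vtv (bigD1 j) //= big1 ?addr0.
    by rewrite mxE !eqxx /= mulr1 sqrtr_sqr ger0_norm //; apply: ltW.
  by move=> k kj; rewrite mxE (negbTE kj) /= mulr0 expr0n.
have sop : forall j, s 0 j <= opnorm (X^T *m X).
  move=> j; rewrite /opnorm -/Eset.
  apply: (@sup_upper_bound _ Eset); last exact: Emem.
  by split; [exists (s 0 j); exact: Emem | exists B; exact: Eub].
have etas : forall j, eta * s 0 j <= 1.
  move=> j; have op0 : 0 < opnorm (X^T *m X) by apply: lt_le_trans (sop j).
  apply: (le_trans (ler_wpM2l (ltW eta0) (sop j))).
  apply: (le_trans (ler_wpM2r (ltW op0) etaop)).
  by rewrite div1r mulVf // lt0r_neq0.
have lam0 : 0 < lambda.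
  by rewrite /lambda; apply: divr_gt0 => //; apply: mulr_gt0 => //; rewrite ltr0n.
have zt : forall i, (V^T *m wt) i 0 =
    b i 0 * ((1 - (1 - eta * s 0 i) ^+ t) / s 0 i).
  by move=> i; rewrite /wt (@gd_coord _ _ _ _ _ _ _ _ VtV hA spos).
have zl : forall i, (V^T *m wl) i 0 = b i 0 / (s 0 i + lambda).
  move=> i; rewrite /wl (@ridge_coord _ _ _ _ _ _ _ _ VtV hA) // => j.
  by apply: addr_gt0.
have coord : forall i, (V^T *m (wt - wl)) i 0 ^+ 2 <= c * (V^T *m wt) i 0 ^+ 2.
  move=> i; rewrite mulmxBr.
  have -> : (V^T *m wt - V^T *m wl) i 0 = (V^T *m wt) i 0 - (V^T *m wl) i 0.
    by rewrite !mxE.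
  rewrite zt zl.
  have K := @scalar_key R (s 0 i) smin eta t smin0 (sminle i) eta0 (etas i) t1.
  rewrite -mulrBr [X in X <= _]exprMn [in X in _ <= X]exprMn [X in _ <= X]mulrCA.
  apply: ler_wpM2l; first exact: sqr_ge0.
  by rewrite -[(s 0 i + lambda)^-1]div1r.
have c0 : 0 <= c.
  rewrite /c /cte le_min; apply/andP; split => //.
  rewrite div1r invr_ge0; apply: mulr_ge0; [apply: mulr_ge0|]; exact: sqr_ge0.
split.
  under eq_bigr do rewrite linf_sub.
  rewrite !sum_data hA !quadA mulr_sumr; apply: ler_sum => j _.
  rewrite [X in _ <= X]mulrCA; apply: ler_wpM2l; [exact: ltW | exact: coord].
move=> hm hi Sigma hSpd; cbv zeta.
have symS : Sigma^T = Sigma.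
  apply/matrixP => i j; rewrite !mxE; apply: eq_Rintegral => w _; exact: mulrC.
have [amin [amax [eig1 eig2 bnd]]] := @rayleigh R _ Sigma symS.
have eigv : forall e, eigenvalue Sigma e -> exists2 v : 'rV[R]_d.+1,
    0 < (v *m v^T) 0 0 & (v *m Sigma *m v^T) 0 0 = e * (v *m v^T) 0 0.
  move=> e /eigenvalueP [v ve vn0]; exists v.
    have -> : (v *m v^T) 0 0 = \sum_j v 0 j ^+ 2.
      by rewrite mxE; apply: eq_bigr => j _; rewrite !mxE expr2.
    rewrite lt_neqAle sumr_ge0 ?andbT; last by move=> i _; exact: sqr_ge0.
    apply/eqP => /esym /psumr_eq0P H; move/negP: vn0; apply; apply/eqP/matrixP => i j.
    rewrite ord1 mxE; apply/eqP; rewrite -sqrf_eq0; apply/eqP; apply: H => // k _.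
    exact: sqr_ge0.
  by rewrite ve -scalemxAl [LHS]mxE.
have Ebound : forall e, eigenvalue Sigma e -> amin <= e /\ e <= amax.
  move=> e /eigv [v N0 qe]; have [h1 h2] := bnd v^T.
  rewrite !trmxK qe in h1 h2.
  by split; [rewrite -(ler_pM2r N0) | rewrite -(ler_pM2r N0)].
have amin0 : 0 < amin.
  have [v N0 qe] := eigv _ eig1.
  have vT0 : v^T != 0.
    apply/eqP => h; move: N0; have -> : v = 0 by rewrite -[v]trmxK h trmx0.
    by rewrite mul0mx mxE ltxx.
  by have := hSpd _ vT0; rewrite trmxK qe pmulr_lgt0.
have amax0 : 0 < amax by apply: lt_le_trans amin0 (Ebound _ eig2).1.
have supE : sup (eigs Sigma) = amax.
  by apply: sup_max => // e /Ebound [].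
have infE : inf (eigs Sigma) = amin.
  by apply: inf_min => // e /Ebound [].
have E1 : (fun w => ((linf wt (x w) - linf wl (x w)) ^+ 2)%:E) =
          (fun w => ((linf (wt - wl) (x w)) ^+ 2)%:E).
  by apply/funext => w; rewrite linf_sub.
rewrite E1.
have I1 := @int_quad R d0 T P _ x hm hi (wt - wl).
have I2 := @int_quad R d0 T P _ x hm hi wt.
rewrite -/Sigma in I1 I2.
rewrite I1 I2.
rewrite /cond_number supE infE -EFinM lee_fin.
have hu := (bnd (wt - wl)).2; have hw := (bnd wt).1.
have nu : ((wt - wl)^T *m (wt - wl)) 0 0 <= c * (wt^T *m wt) 0 0.
  rewrite -(@norm_Vt _ _ _ VtV (wt - wl)) -(@norm_Vt _ _ _ VtV wt) !sq_tr mulr_sumr; apply: ler_sum => j _; exact: coord.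
apply: (le_trans hu).
apply: (@le_trans _ _ (amax * (c * (wt^T *m wt) 0 0))).
  by rewrite ler_pM2l.
have -> : amax * (c * (wt^T *m wt) 0 0) = amax / amin * c * (amin * (wt^T *m wt) 0 0).
  by field; apply: lt0r_neq0.
rewrite ler_wpM2l //.
by apply: mulr_ge0 => //; apply: divr_ge0; apply: ltW.
Qed.
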